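(* Let $\mathcal F_1$ be a finite set of partial patterns. Then there exists a finite set $\mathcal F_2$ of permutation patterns (permutation matrices) such that $C_n(\mathcal F_1)=C_n(\mathcal F_2)$ for all $n\in\mathbb N$.
   Context: A partial pattern is a $0$-$1$ matrix (not necessarily square) in which every row and every column contains at most one $1$; every permutation matrix is a partial pattern. An $n\times n$ permutation matrix $M$ contains a partial pattern $L$ if $L$ can be obtained from $M$ by deleting some rows and columns, and avoids $L$ otherwise. For a set $\mathcal F$ of partial patterns, $C_n(\mathcal F)$ is the number of $n\times n$ permutation matrices avoiding every partial pattern in $\mathcal F$. (For permutation matrices, this coincides with the usual notion of permutation pattern containment.) *)

(* Defs.v *)
From mathcomp Require Import all_boot all_order all_algebra all_fingroup.
Set Implicit Arguments. Unset Strict Implicit. Unset Printing Implicit Defensive.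

Record ppat := PPat { pr : nat; pc : nat; pm : 'M[bool]_(pr, pc) }.

Definition is_partial (L : ppat) : bool :=
  [forall i : 'I_(pr L), #|[pred j : 'I_(pc L) | pm L i j]| <= 1] &&
  [forall j : 'I_(pc L), #|[pred i : 'I_(pr L) | pm L i j]| <= 1].

Definition perm_pat (k : nat) (s : {perm 'I_k}) : ppat :=
  @PPat k k (\matrix_(i < k, j < k) (s i == j)).

Definition incr (k n : nat) (f : {ffun 'I_k -> 'I_n}) : bool :=
  [forall i : 'I_k, forall j : 'I_k, (i < j) ==> (f i < f j)].

(* The n x n permutation matrix of s contains L: L is obtained by deleting
   some rows and columns, i.e. by keeping rows r(0)<..<r(k-1) and columns
   c(0)<..<c(l-1). *)
Definition contains (n : nat) (s : {perm 'I_n}) (L : ppat) : bool :=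
  [exists r : {ffun 'I_(pr L) -> 'I_n}, exists c : {ffun 'I_(pc L) -> 'I_n},
    [&& incr r, incr c &
        [forall i : 'I_(pr L), forall j : 'I_(pc L),
           pm L i j == (s (r i) == c j)]]].

Definition Cn (n : nat) (F : seq ppat) : nat :=
  #|[pred s : {perm 'I_n} | all (fun L => ~~ contains s L) F]|.

(* Main.v *)
Require Import Defs.
From mathcomp Require Import all_boot all_order all_algebra all_fingroup.
Set Implicit Arguments. Unset Strict Implicit. Unset Printing Implicit Defensive.

Lemma enum_sorted n (A : {pred 'I_n}) : sorted (relpre val ltn) (enum A).
Proof.
have -> : enum A = [seq x <- enum 'I_n | x \in A].
  by rewrite {2}/enum_mem filter_predT /enum_mem.
apply: sorted_filter; first by move=> a b c /= ; apply: ltn_trans.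
by rewrite -sorted_map val_enum_ord iota_ltn_sorted.
Qed.

Lemma enum_val_homo n (A : {pred 'I_n}) (i j : 'I_#|A|) :
  i < j -> enum_val i < enum_val j.
Proof.
move=> lij; have x0 := enum_val i.
rewrite !(enum_val_nth x0).
have := sorted_ltn_nth _ x0 (enum_sorted A); apply => //.
- by move=> a b c /=; apply: ltn_trans.
- by rewrite inE -cardE.
- by rewrite inE -cardE.
Qed.

Lemma enum_val_mono n (A : {pred 'I_n}) (i j : 'I_#|A|) :
  (enum_val i < enum_val j) = (i < j).
Proof.
case: (ltngtP i j) => h.
- by rewrite enum_val_homo.
- by apply/negbTE; rewrite -leqNgt ltnW // enum_val_homo.
- have -> : i = j by apply: val_inj.
  by rewrite ltnn.
Qed.

Lemma incr_comp a b c (f : {ffun 'I_b -> 'I_c}) (g : {ffun 'I_a -> 'I_b}) :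
  incr f -> incr g -> incr [ffun i => f (g i)].
Proof.
move=> /forallP hf /forallP hg; apply/forallP => i; apply/forallP => j.
apply/implyP => lij; rewrite !ffunE.
have /forallP/(_ j)/implyP := hg i; move/(_ lij) => h.
by have /forallP/(_ (g j))/implyP := hf (g i); apply.
Qed.

Lemma contains_trans n (s : {perm 'I_n}) k (p : {perm 'I_k}) L :
  contains s (perm_pat p) -> contains p L -> contains s L.
Proof.
move=> /existsP [r /existsP [c /and3P [ir ic /forallP H]]].
move=> /existsP [r' /existsP [c' /and3P [ir' ic' /forallP H']]].
apply/existsP; exists [ffun i => r (r' i)]; apply/existsP.
exists [ffun j => c (c' j)]; apply/and3P; split; try exact: incr_comp.
apply/forallP => i; apply/forallP => j; rewrite !ffunE.
have /forallP/(_ j)/eqP -> := H' i.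
have /forallP/(_ (c' j))/eqP <- := H (r' i).
by rewrite /= mxE.
Qed.

Lemma rank_in_indep (T : finType) (A : {pred T}) x0 x1 (h0 : x0 \in A) (h1 : x1 \in A) x :
  x \in A -> enum_rank_in h0 x = enum_rank_in h1 x.
Proof. by move=> xA; apply: enum_val_inj; rewrite !enum_rankK_in. Qed.

Lemma rank_in_eq (T : finType) (A : {pred T}) x0 x1 (h0 : x0 \in A) (h1 : x1 \in A) x y :
  x \in A -> y \in A -> (enum_rank_in h0 x == enum_rank_in h1 y) = (x == y).
Proof.
move=> xA yA; apply/eqP/eqP => [e|->]; last exact: rank_in_indep.
by rewrite -(enum_rankK_in h0 xA) e enum_rankK_in.
Qed.

Lemma extract n (s : {perm 'I_n}) L : contains s L ->
  exists k, exists p : {perm 'I_k},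
    [/\ k <= pr L + pc L, contains s (perm_pat p) & contains p L].
Proof.
move=> /existsP [r0 /existsP [c0 /and3P [ir0 ic0 /forallP H0]]].
pose S : {set 'I_n} := [set r0 i | i : 'I_(pr L)] :|: [set (s^-1)%g (c0 j) | j : 'I_(pc L)].
pose T : {set 'I_n} := s @: S.
have eTS : #|T| = #|S| by rewrite card_imset //; apply: perm_inj.
have HT : forall i : 'I_#|S|, s (enum_val i) \in T.
  by move=> i; apply: imset_f; apply: enum_valP.
pose g (i : 'I_#|S|) : 'I_#|S| := cast_ord eTS (enum_rank_in (HT i) (s (enum_val i))).
have ginj : injective g.
  move=> i j /(congr1 val) /= /val_inj /eqP.
  rewrite rank_in_eq ?HT // => /eqP /perm_inj; apply: enum_val_inj.
pose p := perm ginj.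
exists #|S|, p; split.
- apply: (leq_trans (leq_card_setU _ _)); apply: leq_add.
    by apply: (leq_trans (leq_imset_card _ _)); rewrite cardT size_enum_ord.
  by apply: (leq_trans (leq_imset_card _ _)); rewrite cardT size_enum_ord.
- apply/existsP; exists [ffun i => enum_val i]; apply/existsP.
  exists [ffun j => enum_val (cast_ord (esym eTS) j)]; apply/and3P; split.
  + apply/forallP=> i; apply/forallP=> j; apply/implyP=> lij; rewrite !ffunE.
    exact: enum_val_homo.
  + apply/forallP=> i; apply/forallP=> j; apply/implyP=> lij; rewrite !ffunE.
    exact: enum_val_homo.
  + apply/forallP=> i; apply/forallP=> j; rewrite !ffunE /= mxE permE /g.
    rewrite -{1}(cast_ordKV eTS j).
    set j' := cast_ord (esym eTS) j.
    have -> : (cast_ord eTS (enum_rank_in (HT i) (s (enum_val i))) == cast_ord eTS j')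
        = (enum_rank_in (HT i) (s (enum_val i)) == j').
      by apply/eqP/eqP => [/(congr1 val) /= e|->//]; apply: val_inj.
    rewrite -{1}(enum_valK_in (HT i) j') rank_in_eq ?HT //; exact: enum_valP.
- have HS1 : forall i, r0 i \in S.
    by move=> i; rewrite inE; apply/orP; left; apply: imset_f.
  have HS2 : forall j, (s^-1)%g (c0 j) \in S.
    by move=> j; rewrite inE; apply/orP; right; apply: imset_f.
  have HT2 : forall j, c0 j \in T.
    by move=> j; rewrite -{1}(permKV s (c0 j)); apply: imset_f.
  apply/existsP; exists [ffun i => enum_rank_in (HS1 i) (r0 i)]; apply/existsP.
  exists [ffun j => cast_ord eTS (enum_rank_in (HT2 j) (c0 j))]; apply/and3P; split.
  + apply/forallP=> i; apply/forallP=> j; apply/implyP=> lij; rewrite !ffunE.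
    rewrite -enum_val_mono !enum_rankK_in //.
    by have /forallP/(_ j)/implyP := (forallP ir0) i; apply.
  + apply/forallP=> i; apply/forallP=> j; apply/implyP=> lij; rewrite !ffunE /=.
    rewrite -enum_val_mono !enum_rankK_in //.
    by have /forallP/(_ j)/implyP := (forallP ic0) i; apply.
  + apply/forallP=> i; apply/forallP=> j; rewrite !ffunE permE /g.
    set a := enum_rank_in (HS1 i) (r0 i).
    have -> : (cast_ord eTS (enum_rank_in (HT a) (s (enum_val a)))
       == cast_ord eTS (enum_rank_in (HT2 j) (c0 j))) = (s (enum_val a) == c0 j).
      rewrite -(rank_in_eq (HT a) (HT2 j)) ?HT2 ?HT //.
    rewrite /a enum_rankK_in //.
    exact: (forallP (H0 i)).
Qed.

Definition bnd (F : seq ppat) := foldr (fun L m => maxn (pr L + pc L) m) 0 F.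

Lemma has_wit (F : seq ppat) (a : pred ppat) : has a F ->
  exists L, [/\ a L, pr L + pc L <= bnd F & forall b : pred ppat, b L -> has b F].
Proof.
elim: F => [|L F IH] //= /orP [aL|hF].
  exists L; split => //; first exact: leq_maxl.
  by move=> b ->.
have [L' [aL' le hb]] := IH hF; exists L'; split => //.
  by apply: (leq_trans le); exact: leq_maxr.
by move=> b /hb ->; rewrite orbT.
Qed.

Definition allp (N : nat) : seq {k : nat & {perm 'I_k}} :=
  flatten [seq [seq Tagged (fun k => {perm 'I_k}) p | p <- enum {perm 'I_k}] | k <- iota 0 N.+1].

Theorem proposition3p1 (F1 : seq ppat) :
  all is_partial F1 ->
  exists F2 : seq {k : nat & {perm 'I_k}},
    forall n : nat, Cn n F1 = Cn n [seq perm_pat (projT2 x) | x <- F2].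
Proof.
move=> _.
exists [seq x <- allp (bnd F1) | has (fun L => contains (projT2 x) L) F1].
move=> n; apply: eq_card => s; rewrite !inE all_map.
have -> : all (fun L => ~~ contains s L) F1 = ~~ has (contains s) F1.
  by rewrite -all_predC.
have -> : all (preim (fun x : {k : nat & {perm 'I_k}} => perm_pat (projT2 x))
                     (fun L => ~~ contains s L))
            [seq x <- allp (bnd F1) | has (fun L => contains (projT2 x) L) F1]
    = ~~ has (fun x : {k : nat & {perm 'I_k}} => contains s (perm_pat (projT2 x)))
            [seq x <- allp (bnd F1) | has (fun L => contains (projT2 x) L) F1].
  by rewrite -all_predC.
congr negb; apply/idP/idP.
- move=> /has_wit [L [sL le hb]].
  have [k [p [lek sp pL]]] := extract sL.
  apply/hasP; exists (Tagged (fun k => {perm 'I_k}) p) => //.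
  rewrite mem_filter /=; apply/andP; split; first by apply: hb.
  apply/flatten_mapP; exists k; first by rewrite mem_iota /= ltnS (leq_trans lek).
  by apply: map_f; rewrite mem_enum.
- move=> /hasP [x]; rewrite mem_filter => /andP [hx _] sx.
  apply: sub_has hx => L; exact: contains_trans.
Qed.
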